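(* Let $p$ be an odd prime and $C_p*C_p=\langle a,b : a^p,b^p\rangle$. If $\gamma\in C_p*C_p$ is nontrivial and is not a power of $b$, then the element $\gamma[b,\gamma]$ has infinite order.
   Context: Commutator convention: $[x,y]=x^{-1}y^{-1}xy$, so $\gamma[b,\gamma]=\gamma b^{-1}\gamma^{-1}b\gamma$. *)

(* Defs.v *)
(* Concrete normal-form model of the free product
   C_p * C_p = < a, b | a^p, b^p >.
   An element is a reduced word: a list of syllables (g, e) where g = true
   stands for the generator a, g = false for b, the exponent e satisfies
   0 < e < p, and consecutive syllables use different generators.
   By the normal form theorem for free products, reduced words are in
   bijection with the elements of C_p * C_p, and the operations below are the
   group operations transported along this bijection. *)
From mathcomp Require Import all_boot.
Set Implicit Arguments. Unset Strict Implicit. Unset Printing Implicit Defensive.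

Definition syll := (bool * nat)%type.
Definition word := seq syll.

Fixpoint alternating (w : word) : bool :=
  match w with
  | x :: ((y :: _) as w') => (x.1 != y.1) && alternating w'
  | _ => true
  end.

Definition reduced (p : nat) (w : word) : bool :=
  all (fun x => (0 < x.2 < p)) w && alternating w.

Definition push (p : nat) (x : syll) (w : word) : word :=
  let g := x.1 in
  let e := x.2 %% p in
  if e == 0 then w else
  match w with
  | [::] => [:: (g, e)]
  | y :: w' =>
      if g == y.1 then
        let s := (e + y.2) %% p in
        if s == 0 then w' else (g, s) :: w'
      else (g, e) :: w
  end.

Definition fpmul (p : nat) (u v : word) : word := foldr (push p) v u.
Definition fpone : word := [::].
Definition fpinv (p : nat) (u : word) : word :=
  rev (map (fun x : syll => (x.1, p - x.2)) u).
Definition fpexp (p : nat) (u : word) (n : nat) : word :=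
  iter n (fpmul p u) fpone.

Definition gen_a : word := [:: (true, 1)].
Definition gen_b : word := [:: (false, 1)].

(* commutator convention [x,y] = x^-1 y^-1 x y *)
Definition fpcomm (p : nat) (x y : word) : word :=
  fpmul p (fpinv p x) (fpmul p (fpinv p y) (fpmul p x y)).

(* Main.v *)
Require Import Defs.
From mathcomp Require Import all_boot.
Set Implicit Arguments. Unset Strict Implicit. Unset Printing Implicit Defensive.

Definition hg (s : word) : option bool := if s is x :: _ then Some x.1 else None.
Fixpoint lg (s : word) : option bool :=
  match s with [::] => None | [:: x] => Some x.1 | _ :: s' => lg s' end.
Definition compat (u v : word) : bool :=
  match lg u, hg v with Some a, Some b => a != b | _, _ => true end.

Lemma lg_cons x u : lg (x :: u) = if u is [::] then Some x.1 else lg u.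
Proof. by case: u. Qed.

Lemma hg_cat u v : hg (u ++ v) = if u is [::] then hg v else hg u.
Proof. by case: u. Qed.

Lemma lg_cat u v : lg (u ++ v) = if v is [::] then lg u else lg v.
Proof.
elim: u => [|x u IH]; first by case: v.
rewrite cat_cons lg_cons IH lg_cons.
by case: u {IH} => [|y u] /=; case: v.
Qed.

Lemma alt_cat u v : alternating (u ++ v) = [&& alternating u, alternating v & compat u v].
Proof.
elim: u => [|x u IH]; first by rewrite /compat /=; case: (hg v); rewrite ?andbT.
case: u IH => [|z u] IH.
  case: v {IH} => [|y v] //=; rewrite /compat /=; by rewrite andbC.
have -> : alternating ((x :: z :: u) ++ v) = (x.1 != z.1) && alternating ((z :: u) ++ v) by [].
rewrite IH /= /compat.
have -> : lg [:: x, z & u] = lg (z :: u) by [].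
by rewrite !andbA.
Qed.

Lemma reduced_cat p u v : reduced p (u ++ v) = [&& reduced p u, reduced p v & compat u v].
Proof.
rewrite /reduced all_cat alt_cat.
set A := all _ u. set B := all _ v. clearbody A B.
by case: A B (alternating u) (alternating v) (compat u v) => [] [] [] [] [].
Qed.

Lemma reduced_cons p x w : reduced p (x :: w) = [&& 0 < x.2 < p, reduced p w & compat [:: x] w].
Proof.
rewrite -cat1s reduced_cat; congr (_ && _).
by rewrite /reduced /= !andbT.
Qed.

Lemma compat1 (x : syll) w : compat [:: x] w = if w is y :: _ then x.1 != y.1 else true.
Proof. by case: w. Qed.

Lemma push_red p x w : 0 < p -> reduced p w -> reduced p (push p x w).
Proof.
move=> p0; case: x => g e; rewrite /push /=.
case: eqP => [//|ne].
case: w => [|y w] Hw.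
  by rewrite reduced_cons compat1 /= ltn_pmod // !andbT lt0n; apply/eqP.
move: Hw; rewrite reduced_cons => /and3P [Hy Hw Hc].
case: eqP => [Hg|Hg].
  case: eqP => [//|ns].
  rewrite reduced_cons Hw ltn_pmod // andbT lt0n.
  apply/andP; split; first by apply/eqP.
  by move: Hc; rewrite !compat1 /= Hg.
rewrite reduced_cons reduced_cons Hy Hw Hc ltn_pmod // lt0n compat1 /= andbT.
by apply/andP; split; [apply/eqP | apply/eqP].
Qed.

Lemma fpmul_red p u v : 0 < p -> reduced p v -> reduced p (fpmul p u v).
Proof. move=> p0 Hv; elim: u => [|x u IH] //=; exact: push_red. Qed.

Lemma fpmul_cons p x u v : fpmul p (x :: u) v = push p x (fpmul p u v).
Proof. by []. Qed.

Lemma fpmul_cat p u v w : fpmul p (u ++ v) w = fpmul p u (fpmul p v w).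
Proof. by rewrite /fpmul foldr_cat. Qed.

Lemma fpexp_red p u n : 0 < p -> reduced p (fpexp p u n).
Proof. move=> p0; elim: n => [|n IH] //=; exact: fpmul_red. Qed.

Lemma push_cons p x w : reduced p (x :: w) -> push p x w = x :: w.
Proof.
case: x => g e; rewrite reduced_cons /= => /and3P [/andP [e0 ep] Hw Hc].
rewrite /push /= modn_small // ifN; last by rewrite -lt0n.
case: w Hw Hc => [|y w] //= _ Hc.
by rewrite ifN.
Qed.

Lemma fpmul_catE p u v : reduced p (u ++ v) -> fpmul p u v = u ++ v.
Proof.
elim: u => [|x u IH] //= H.
rewrite IH; first exact: push_cons.
by move: H; rewrite reduced_cons => /and3P [].
Qed.

Lemma fpinv_cons p x u : fpinv p (x :: u) = fpinv p u ++ [:: (x.1, p - x.2)].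
Proof. by rewrite /fpinv /= rev_cons cats1. Qed.

Lemma fpinv_cat p u v : fpinv p (u ++ v) = fpinv p v ++ fpinv p u.
Proof. by rewrite /fpinv map_cat rev_cat. Qed.

Lemma push_inv p x w : 0 < x.2 < p -> push p (x.1, p - x.2) (x :: w) = w.
Proof.
case: x => g e /= /andP [e0 ep]; rewrite /push /=.
have H1 : p - e < p by rewrite ltn_subrL e0 (leq_ltn_trans _ ep).
have H2 : p - e != 0 by rewrite -lt0n subn_gt0.
rewrite (modn_small H1) (negbTE H2) eqxx subnK ?modnn //; exact: ltnW.
Qed.

Lemma fpmul_invK p c r : reduced p (c ++ r) -> fpmul p (fpinv p c) (c ++ r) = r.
Proof.
elim: c => [|x c IH] //= H.
move: H; rewrite reduced_cons => /and3P [Hx H _].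
by rewrite fpinv_cons fpmul_cat /= push_inv // IH.
Qed.

Lemma compat_cons u x v : compat u (x :: v) = compat u [:: x].
Proof. by []. Qed.

Lemma compat_catr u v w : v != [::] -> compat u (v ++ w) = compat u v.
Proof. by rewrite /compat hg_cat; case: v. Qed.

Lemma compat_catl u v w : v != [::] -> compat (u ++ v) w = compat v w.
Proof. by rewrite /compat lg_cat; case: v. Qed.

Lemma red_l p u v : reduced p (u ++ v) -> reduced p u.
Proof. by rewrite reduced_cat => /and3P []. Qed.
Lemma red_r p u v : reduced p (u ++ v) -> reduced p v.
Proof. by rewrite reduced_cat => /and3P []. Qed.
Lemma red_c p u v : reduced p (u ++ v) -> compat u v.
Proof. by rewrite reduced_cat => /and3P []. Qed.

Lemma fpexp1 p x : reduced p x -> fpexp p x 1 = x.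
Proof. by move=> Hx; rewrite /= /fpone fpmul_catE ?cats0. Qed.

Lemma powF1 p c y x : 0 < p -> reduced p x -> x = c ++ y ++ fpinv p c ->
  y != [::] -> compat y y ->
  forall n, exists r, fpexp p x n.+1 = c ++ y ++ r ++ fpinv p c.
Proof.
move=> p0 Hx ex yn cy; elim => [|n [r IH]].
  by exists [::]; rewrite fpexp1.
have Hw := fpexp_red x n.+1 p0; rewrite IH in Hw.
have -> : fpexp p x n.+2 = fpmul p x (fpexp p x n.+1) by [].
rewrite IH {1}ex !fpmul_cat fpmul_invK //.
have Hx' := Hx; rewrite ex in Hx'.
have Hy : reduced p (y ++ y ++ r ++ fpinv p c).
  rewrite reduced_cat (red_l (red_r Hx')) (red_r Hw) compat_catr //.
rewrite (fpmul_catE Hy).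
have Hc : reduced p (c ++ y ++ y ++ r ++ fpinv p c).
  rewrite reduced_cat (red_l Hx') Hy compat_catr //.
  by have := red_c Hx'; rewrite compat_catr.
by rewrite (fpmul_catE Hc); exists (y ++ r); rewrite !catA.
Qed.

Lemma push_merge p l h r : 0 < l.2 < p -> l.1 = h.1 -> (l.2 + h.2) %% p != 0 ->
  push p l (h :: r) = (l.1, (l.2 + h.2) %% p) :: r.
Proof.
case: l => g e; case: h => g' e' /= /andP [e0 ep] <- H.
rewrite /push /= modn_small // ifN ?eqxx ?ifN //; by rewrite -lt0n.
Qed.

Lemma powF2 p c h m l x : 0 < p -> reduced p x -> x = c ++ h :: m ++ l :: fpinv p c ->
  h.1 = l.1 -> (l.2 + h.2) %% p != 0 ->
  forall n, exists r, fpexp p x n.+1 = c ++ h :: r ++ l :: fpinv p c.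
Proof.
move=> p0 Hx ex hl ns; elim => [|n [r IH]].
  by exists m; rewrite fpexp1.
have Hw := fpexp_red x n.+1 p0; rewrite IH in Hw.
have -> : fpexp p x n.+2 = fpmul p x (fpexp p x n.+1) by [].
have ex' : x = c ++ (h :: m) ++ [:: l] ++ fpinv p c by rewrite ex.
have Hx' := Hx; rewrite ex' in Hx'.
have Hl : 0 < l.2 < p.
  by move: (red_l (red_r (red_r Hx'))); rewrite reduced_cons => /and3P [].
rewrite IH {1}ex' !fpmul_cat fpmul_invK //.
have Hr : reduced p (h :: r ++ l :: fpinv p c) := red_r Hw.
have Hp := push_red l p0 Hr.
rewrite [fpmul p [:: l] _]/= push_merge // in Hp *.
have Hm : reduced p ((h :: m) ++ (l.1, (l.2 + h.2) %% p) :: r ++ l :: fpinv p c).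
  rewrite reduced_cat Hp (red_l (red_r Hx')) compat_cons /=.
  have := red_c (red_r Hx'); by rewrite /compat.
rewrite (fpmul_catE Hm).
have Hc : reduced p (c ++ (h :: m) ++ (l.1, (l.2 + h.2) %% p) :: r ++ l :: fpinv p c).
  rewrite reduced_cat (red_l Hx') Hm compat_cons.
  by have := red_c Hx'; rewrite compat_cons.
rewrite (fpmul_catE Hc).
by exists (m ++ (l.1, (l.2 + h.2) %% p) :: r); rewrite /= -catA.
Qed.

Lemma lg_rcons s z : lg (s ++ [:: z]) = Some z.1.
Proof. by rewrite lg_cat. Qed.

Lemma lg_inv p u : lg (fpinv p u) = hg u.
Proof. by case: u => [|x u] //; rewrite fpinv_cons lg_rcons. Qed.

Lemma fpinvK p u : reduced p u -> fpinv p (fpinv p u) = u.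
Proof.
elim: u => [|x u IH] //; rewrite reduced_cons => /and3P [/andP [x0 xp] Hu _].
rewrite fpinv_cons fpinv_cat IH //= subKn; last exact: ltnW.
by case: x {x0 xp}.
Qed.

Lemma fpinv_nil p u : (fpinv p u == [::]) = (u == [::]).
Proof. by case: u => [|x u] //; rewrite fpinv_cons; case: (fpinv p u). Qed.

Lemma reduced_inv p u : 0 < p -> reduced p u -> reduced p (fpinv p u).
Proof.
move=> p0; elim: u => [|x u IH] //; rewrite reduced_cons => /and3P [/andP [x0 xp] Hu Hc].
rewrite fpinv_cons reduced_cat IH // reduced_cons /= compat1 !andbT.
rewrite ltn_subrL x0 p0 subn_gt0 xp /=.
rewrite /compat lg_inv /=; move: Hc; rewrite compat1.
by case: u {IH Hu} => [|y u] //=; rewrite eq_sym.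
Qed.

Lemma hg_inv p u : reduced p u -> hg (fpinv p u) = lg u.
Proof. by move=> Hu; rewrite -{2}(fpinvK Hu) lg_inv. Qed.

Definition cm (p e : nat) : word := if e %% p == 0 then [::] else [:: (false, e %% p)].

Lemma cm_mod p e : cm p (e %% p) = cm p e.
Proof. by rewrite /cm modn_mod. Qed.

Lemma cm_red p e : 0 < p -> reduced p (cm p e).
Proof.
move=> p0; rewrite /cm; case: eqP => // ne.
by rewrite reduced_cons compat1 /= ltn_pmod // !andbT lt0n; apply/eqP.
Qed.

Lemma hg_cm p e : hg (cm p e) = if e %% p == 0 then None else Some false.
Proof. by rewrite /cm; case: eqP. Qed.
Lemma lg_cm p e : lg (cm p e) = if e %% p == 0 then None else Some false.
Proof. by rewrite /cm; case: eqP. Qed.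

Lemma cm_inv p e : 0 < p -> fpinv p (cm p e) = cm p (p - e %% p).
Proof.
move=> p0; rewrite /cm; case: eqP => [->|ne]; first by rewrite subn0 modnn eqxx.
have lt : e %% p < p by rewrite ltn_pmod.
have H1 : p - e %% p < p by rewrite ltn_subrL p0 andbT lt0n; apply/eqP.
by rewrite (modn_small H1) ifN // -lt0n subn_gt0.
Qed.

Lemma cm_mul p e e' R : 0 < p -> reduced p R -> hg R != Some false ->
  fpmul p (cm p e) (cm p e' ++ R) = cm p (e + e') ++ R.
Proof.
move=> p0 HR hR.
rewrite -(cm_mod p (e + e')) -modnDm -(cm_mod p e) -(cm_mod p e').
have ha : e %% p < p by rewrite ltn_pmod.
have hb : e' %% p < p by rewrite ltn_pmod.
move: (e %% p) (e' %% p) ha hb => a b ha hb.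
rewrite /cm (modn_small ha) (modn_small hb).
case: (eqVneq a 0) => [->|na]; first by rewrite add0n !modn_mod (modn_small hb).
rewrite /fpmul /= /push /= (modn_small ha) (negbTE na).
case: (eqVneq b 0) => [->|nb].
  rewrite addn0 !(modn_small ha) (negbTE na) /=.
  by case: R HR hR => [|[[] y] R] //= _.
by rewrite /= !modn_mod; case: ifP.
Qed.

Lemma fpexp_b p k : 1 < p -> fpexp p gen_b k = cm p k.
Proof.
move=> p1; have p0 : 0 < p by apply: ltnW.
elim: k => [|k IH]; first by rewrite /cm mod0n.
have -> : fpexp p gen_b k.+1 = fpmul p gen_b (fpexp p gen_b k) by [].
rewrite IH.
have -> : gen_b = cm p 1 by rewrite /cm modn_small.
by rewrite -[cm p k]cats0 cm_mul // cats0 add1n.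
Qed.

Lemma hg_nil (u : word) b : hg u = Some b -> u != [::].
Proof. by case: u. Qed.

Lemma lg_some (u : word) : u != [::] -> exists b, lg u = Some b.
Proof.
elim: u => [//|x u IH] _; rewrite lg_cons.
by case: u IH => [|y u] IH; [exists x.1 | apply: IH].
Qed.

Lemma cm0 p : cm p 0 = [::].
Proof. by rewrite /cm mod0n. Qed.

Lemma cm_small p e : 0 < e < p -> cm p e = [:: (false, e)].
Proof.
case/andP=> e0 ep; rewrite /cm modn_small // ifN //; by rewrite -lt0n.
Qed.

Lemma split_front p g : 1 < p -> reduced p g -> g <> [::] -> (forall k, g <> cm p k) ->
  exists i g1, [/\ g = cm p i ++ g1, reduced p g1 & hg g1 = Some true].
Proof.
move=> p1; case: g => [//|[b e] g'] Hr _ Hk; destruct b.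
  by exists 0, ((true, e) :: g'); rewrite cm0.
move: Hr; rewrite reduced_cons compat1 /= => /and3P [He Hg' Hc].
exists e, g'; rewrite cm_small //; split => //.
case: g' Hk Hg' Hc => [|[b' f] g'] Hk _ //=; last by case: b' {Hk}.
by have := Hk e; rewrite cm_small.
Qed.

Lemma split_back p g1 : reduced p g1 -> hg g1 = Some true ->
  exists j d, [/\ g1 = d ++ cm p j, reduced p d, hg d = Some true & lg d = Some true].
Proof.
case/lastP: g1 => [//|d [b e]] Hr Hh; rewrite -cats1 in Hr Hh *.
destruct b.
  by exists 0, (d ++ [:: (true, e)]); rewrite cm0 cats0 lg_rcons.
move: Hr; rewrite reduced_cat => /and3P [Hd He Hc].
have Hdn : d != [::] by case: d Hh {Hd Hc}.
have He' : 0 < e < p by move: He; rewrite reduced_cons => /and3P [].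
exists e, d; rewrite cm_small //; split => //.
  by move: Hh; rewrite hg_cat; case: d Hdn {Hd Hc}.
move: Hc; rewrite /compat /=; case: (lg_some Hdn) => b ->.
by case: b.
Qed.

Lemma decomp p g : 1 < p -> reduced p g -> g <> [::] -> (forall k, g <> cm p k) ->
  exists i j d, [/\ g = cm p i ++ d ++ cm p j, reduced p d, hg d = Some true & lg d = Some true].
Proof.
move=> p1 Hr Hn Hk; have [i [g1 [-> Hg1 Hh]]] := split_front p1 Hr Hn Hk.
have [j [d [-> Hd Hhd Hld]]] := split_back Hg1 Hh.
by exists i, j, d.
Qed.

Lemma inv_exp p a b : 0 < a < p -> 0 < b < p -> (b + a) %% p = 0 -> b = p - a.
Proof.
move=> /andP [a0 ap] /andP [b0 bp] H.
case: (ltnP (b + a) p) => Hl.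
  have : 0 < b + a by rewrite addn_gt0 b0.
  by rewrite -(modn_small Hl) H.
have Hs : b + a - p < p.
  rewrite ltn_subLR //; apply: (@leq_trans (p + a)); first by rewrite ltn_add2r.
  by rewrite leq_add2l ltnW.
move: H; rewrite -(subnK Hl) modnDr modn_small // => /eqP.
rewrite subn_eq0 => Hle.
have : b + a = p by apply/eqP; rewrite eqn_leq Hle Hl.
by move=> <-; rewrite addnK.
Qed.

Definition cycform (p : nat) (s : word) :=
  (exists x, s = [:: x]) \/ (s != [::] /\ compat s s) \/
  (exists h m l, s = h :: m ++ [:: l] /\ h.1 = l.1 /\ (l.2 + h.2) %% p != 0).

Lemma peel p d : 0 < p -> reduced p d -> d != [::] ->
  exists r s, d = r ++ s ++ fpinv p r /\ cycform p s.
Proof.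
move=> p0; have [n] := ubnP (size d); elim: n d => // n IH d Hs Hr Hn.
case: d Hs Hr Hn => [//|x d'] Hs Hr _.
case/lastP: d' Hs Hr => [|m l] Hs Hr.
  by exists [::], [:: x]; split; [by [] | left; exists x].
rewrite -cats1 in Hs Hr *.
case: (eqVneq x.1 l.1) => Hxl; last first.
  exists [::], (x :: m ++ [:: l]); split; first by rewrite /fpinv /= cats0.
  by right; left; split => //; rewrite /compat -cat_cons lg_rcons /= eq_sym.
case: (eqVneq ((l.2 + x.2) %% p) 0) => Hm; last first.
  exists [::], (x :: m ++ [:: l]); split; first by rewrite /fpinv /= cats0.
  by right; right; exists x, m, l.
move: Hr; rewrite reduced_cons => /and3P [Hx Hr Hc].
have Hmn : m != [::].
  by case: m Hc {Hr Hs} => //; rewrite compat1 /= Hxl eqxx.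
have Hl : 0 < l.2 < p by move: (red_r Hr); rewrite reduced_cons => /and3P [].
have Hl2 := inv_exp Hx Hl Hm.
have Hsm : size m < n.
  by move: Hs; rewrite /= size_cat addn1 ltnS; apply: leq_trans.
have [r [s [Em Hcs]]] := IH m Hsm (red_l Hr) Hmn.
exists (x :: r), s; split => //.
rewrite fpinv_cons Em /= -!catA; congr (_ :: _ ++ _ ++ _ ++ _).
by move: Hxl Hl2; clear; case: l => a b /= <- ->.
Qed.

Lemma hg_catN (u v : word) : u != [::] -> hg (u ++ v) = hg u.
Proof. by case: u. Qed.

Lemma cm_mul0 p e R : 0 < p -> reduced p R -> hg R != Some false ->
  fpmul p (cm p e) R = cm p e ++ R.
Proof. by move=> p0 HR hR; have := @cm_mul p e 0 R p0 HR hR; rewrite cm0 addn0. Qed.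

Lemma mod_core p i : 0 < p -> (i + (p - i %% p)) %% p = 0.
Proof.
move=> p0; rewrite {1}(divn_eq i p) -addnA subnKC; last by apply: ltnW; rewrite ltn_pmod.
by rewrite modnDr modnMl.
Qed.

Lemma cm_zero p k z : z %% p = 0 -> cm p (k + z) = cm p k.
Proof. by move=> Hz; rewrite -cm_mod -modnDmr Hz addn0 cm_mod. Qed.

Lemma Xform p i j d : 1 < p -> reduced p d -> hg d = Some true -> lg d = Some true ->
  fpmul p (cm p i ++ d ++ cm p j) (fpcomm p gen_b (cm p i ++ d ++ cm p j)) =
  cm p i ++ d ++ [:: (false, p - 1)] ++ fpinv p d ++ [:: (false, 1)] ++ d ++ cm p j.
Proof.
move=> p1 Hd Hh Hl; have p0 : 0 < p by apply: ltnW.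
have Hdn : d != [::] by case: d Hh {Hd Hl}.
set R := d ++ cm p j.
have Rr : reduced p R.
  rewrite reduced_cat Hd cm_red //= /compat Hl hg_cm.
  by case: (_ == 0).
have hR : hg R = Some true by rewrite /R hg_cat; case: d Hdn Hh {Hd Hl R Rr}.
have gb : gen_b = cm p 1 by rewrite /cm modn_small.
have gbi : fpinv p gen_b = cm p (p - 1).
  rewrite cm_small; first by [].
  by rewrite subn_gt0 p1 ltn_subrL p0.
have c1 : cm p 1 = [:: (false, 1)] by rewrite cm_small.
have cp1 : cm p (p - 1) = [:: (false, p - 1)] by rewrite cm_small // subn_gt0 p1 ltn_subrL p0.
rewrite /fpcomm.
have -> : fpmul p gen_b (cm p i ++ R) = cm p (1 + i) ++ R by rewrite gb cm_mul // hR.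
rewrite !fpinv_cat !fpmul_cat.
have -> : fpmul p (fpinv p (cm p i)) (cm p (1 + i) ++ R) = [:: (false, 1)] ++ R.
  rewrite cm_inv // cm_mul // ?hR // [p - _ + _]addnC -addnA cm_zero ?c1 //.
  exact: mod_core.
have HS : reduced p (fpinv p d ++ [:: (false, 1)] ++ R).
  rewrite reduced_cat reduced_inv // reduced_cons Rr compat1 /=.
  rewrite /compat lg_inv Hh p1 /=.
  by move: hR; clearbody R; clear Rr; case: R => [|y w] //= [->].
have hS : hg (fpinv p d ++ [:: (false, 1)] ++ R) = Some true.
  rewrite hg_cat hg_inv //; move: (hg_inv Hd); rewrite Hl.
  by case: (fpinv p d).
have -> : fpmul p (fpinv p d) ([:: (false, 1)] ++ R) = fpinv p d ++ [:: (false, 1)] ++ R.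
  by rewrite fpmul_catE.
set S := fpinv p d ++ [:: (false, 1)] ++ R.
rewrite cm_inv // (@cm_mul0 p (p - j %% p) S) ?hS //.
rewrite gbi (@cm_mul p (p - 1) (p - j %% p) S) ?hS //.
rewrite (@cm_mul p j (p - 1 + (p - j %% p)) S) ?hS //.
rewrite addnCA cm_zero ?mod_core // cp1.
have hS' : hg S = Some true := hS.
have HT : reduced p (d ++ [:: (false, p - 1)] ++ S).
  rewrite reduced_cat Hd reduced_cons HS /compat /= hS' Hl /=.
  by rewrite subn_gt0 p1 ltn_subrL p0.
rewrite (fpmul_catE HT) cm_mul0 //.
by rewrite hg_catN // Hh.
Qed.

Lemma nonnil1 (c y r e : word) : y != [::] -> c ++ y ++ r ++ e <> [::].
Proof. by case: c => //; case: y. Qed.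

Lemma nonnil2 (c : word) h r : c ++ h :: r <> [::].
Proof. by case: c. Qed.

Lemma double_nz p a : prime p -> odd p -> 0 < a < p -> (a + a) %% p != 0.
Proof.
move=> pp po /andP [a0 ap].
rewrite -[_ == 0]/(p %| a + a) addnn -mul2n Euclid_dvdM // negb_or; apply/andP; split.
  apply/negP => /(dvdn_leq (isT : 0 < 2)); rewrite leq_eqVlt ltnS => /orP [/eqP p2|].
    by rewrite p2 in po.
  by rewrite leqNgt prime_gt1.
by apply/negP => /(dvdn_leq a0); rewrite leqNgt ap.
Qed.

Lemma lg_catN (u v : word) : v != [::] -> lg (u ++ v) = lg v.
Proof. by rewrite lg_cat; case: v. Qed.

Lemma final p i j d n : prime p -> odd p -> reduced p d -> hg d = Some true -> lg d = Some true ->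
  reduced p (cm p i ++ d ++ [:: (false, p - 1)] ++ fpinv p d ++ [:: (false, 1)] ++ d ++ cm p j) ->
  fpexp p (cm p i ++ d ++ [:: (false, p - 1)] ++ fpinv p d ++ [:: (false, 1)] ++ d ++ cm p j) n.+1 <> [::].
Proof.
move=> pp po Hd Hh Hl Hx.
have p1 := prime_gt1 pp; have p0 : 0 < p by apply: ltnW.
have Hdn : d != [::] by case: d Hh {Hd Hl Hx}.
have fi0 : fpinv p [::] = [::] by [].
case: (eqVneq ((i + j) %% p) 0) => Hij.
  have Ej : cm p j = fpinv p (cm p i).
    rewrite cm_inv // -(@cm_zero p j _ (@mod_core p i p0)) addnA [j + i]addnC.
    by rewrite -cm_mod -modnDml Hij add0n cm_mod.
  have [r [s [Ed Hcs]]] := peel p0 Hd Hdn.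
  have Hr : reduced p r by rewrite Ed in Hd; exact: red_l Hd.
  have Hs : reduced p s by rewrite Ed in Hd; exact: red_l (red_r Hd).
  have Ei : fpinv p d = r ++ fpinv p s ++ fpinv p r by rewrite Ed !fpinv_cat fpinvK // catA.
  set c := cm p i ++ r.
  have EX : forall W, W = s ++ fpinv p r ++ [:: (false, p - 1)] ++ (r ++ fpinv p s ++ fpinv p r) ++ [:: (false, 1)] ++ r ++ s ->
     cm p i ++ d ++ [:: (false, p - 1)] ++ fpinv p d ++ [:: (false, 1)] ++ d ++ cm p j = c ++ W ++ fpinv p c.
    by move=> W ->; rewrite Ej Ei Ed /c fpinv_cat -!catA.
  case: Hcs => [[x Ex]|[[Hsn Hss]|[h [m [l [Es [Ehl Hhl]]]]]]].
  - have Hx2 : 0 < x.2 < p by move: Hs; rewrite Ex reduced_cons => /and3P [].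
    have [|rr ->] := @powF2 p c x (fpinv p r ++ [:: (false, p - 1)] ++ (r ++ fpinv p s ++ fpinv p r) ++ [:: (false, 1)] ++ r) x _ p0 Hx _ (erefl x.1) (double_nz pp po Hx2) n; last exact: nonnil2.
    by rewrite (EX _ (erefl _)) Ex -!catA /= -?catA.
  - set W := s ++ fpinv p r ++ [:: (false, p - 1)] ++ (r ++ fpinv p s ++ fpinv p r) ++ [:: (false, 1)] ++ r ++ s.
    have HWn : W != [::] by rewrite /W; case: (s) Hsn.
    have HWW : compat W W.
      rewrite {1}/W !catA compat_catl // /W compat_catr //.
    have [rr ->] := powF1 p0 Hx (EX W (erefl _)) HWn HWW n.
    exact: nonnil1.
  - have [|rr ->] := @powF2 p c h (m ++ [:: l] ++ fpinv p r ++ [:: (false, p - 1)] ++ (r ++ fpinv p s ++ fpinv p r) ++ [:: (false, 1)] ++ r ++ [:: h] ++ m) l _ p0 Hx _ Ehl Hhl n; last exact: nonnil2.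
    by rewrite (EX _ (erefl _)) Es -!catA /= -?catA.
have hX : forall u, hg (d ++ u) = Some true by move=> u; rewrite hg_catN.
have lX : forall u, lg (u ++ d) = Some true by move=> u; rewrite lg_catN.
case: (eqVneq (i %% p) 0) => Hi.
  have Hj : j %% p != 0 by apply: contra_neq Hij => Hj; rewrite -modnDm Hi Hj mod0n.
  have Ei : cm p i = [::] by rewrite /cm Hi.
  have Ej : cm p j = [:: (false, j %% p)] by rewrite /cm (negbTE Hj).
  rewrite Ei Ej cat0s in Hx *.
  set X := d ++ _ in Hx *.
  have HXn : X != [::] by rewrite /X; case: (d) Hdn.
  have HXX : compat X X.
    rewrite /compat /X hX.
    rewrite -[lg _]/(lg (d ++ [:: (false,p-1)] ++ fpinv p d ++ [:: (false,1)] ++ d ++ [:: (false, j %% p)])).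
    by rewrite !catA lg_rcons.
  have EXX : X = [::] ++ X ++ fpinv p [::] by rewrite fi0 cats0.
  have [rr ->] := @powF1 p [::] X X p0 Hx EXX HXn HXX n.
  exact: nonnil1.
have Ei : cm p i = [:: (false, i %% p)] by rewrite /cm (negbTE Hi).
case: (eqVneq (j %% p) 0) => Hj.
  have Ej : cm p j = [::] by rewrite /cm Hj.
  rewrite Ei Ej cats0 in Hx *.
  set X := [:: (false, i %% p)] ++ d ++ [:: (false,p-1)] ++ fpinv p d ++ [:: (false,1)] ++ d in Hx *.
  have HXX : compat X X.
    rewrite /compat /X.
    by rewrite !catA lX.
  have EXX : X = [::] ++ X ++ fpinv p [::] by rewrite fi0 cats0.
  have [rr ->] := @powF1 p [::] X X p0 Hx EXX isT HXX n.
  exact: nonnil1.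
have Ej : cm p j = [:: (false, j %% p)] by rewrite /cm (negbTE Hj).
rewrite Ei Ej in Hx *.
have Hs : ((false, j %% p).2 + (false, i %% p).2) %% p != 0 by rewrite /= addnC modnDm.
have [|rr ->] := @powF2 p [::] (false, i %% p) (d ++ [:: (false, p - 1)] ++ fpinv p d ++ [:: (false, 1)] ++ d) (false, j %% p) _ p0 Hx _ (erefl _) Hs n; last exact: nonnil2.
by rewrite fi0 /= -!catA /= -?catA.
Qed.

Theorem mainTheorem14 (p : nat) (gamma : word) :
  prime p -> odd p ->
  reduced p gamma ->
  gamma <> fpone ->
  (forall k : nat, gamma <> fpexp p gen_b k) ->
  forall n : nat, 0 < n ->
    fpexp p (fpmul p gamma (fpcomm p gen_b gamma)) n <> fpone.
Proof.
move=> pp po Hr Hn Hk n n0.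
have p1 := prime_gt1 pp; have p0 : 0 < p by apply: ltnW.
have Hk' : forall k, gamma <> cm p k by move=> k; rewrite -fpexp_b.
have Hx : reduced p (fpmul p gamma (fpcomm p gen_b gamma)).
  by rewrite /fpcomm; do 4!apply: fpmul_red => //.
have [i [j [d [Eg Hd Hh Hl]]]] := decomp p1 Hr Hn Hk'.
rewrite Eg Xform // in Hx *.
case: n n0 => // n _.
exact: final.
Qed.
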